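(* There is a constant $C>0$ such that the following holds. Let $a\neq b$ be points of $\mathbb{R}/\tau\mathbb{Z}$. Let $n_1<n_1+k_1$ be two consecutive elements of $Z(a,b)$ (i.e. $k_1>0$ and no element of $Z(a,b)$ lies strictly between them), and let $n_2<n_2+k_2$ be another pair of consecutive elements of $Z(a,b)$. Then $k_1<Ck_2$.
   Context: $\tau=\frac{1+\sqrt5}{2}$. For real $x$, $x\bmod\tau$ is its image in $\mathbb{R}/\tau\mathbb{Z}$. For $a,b\in\mathbb{R}/\tau\mathbb{Z}$, $(a,b)$ denotes the open arc from $a$ to $b$ in the positive direction of the circle, and $Z(a,b)$ is the set of integers $n$ with $n\bmod\tau\in(a,b)$. The constant $C$ is independent of all variables. *)

(* Defs.v *)
From Stdlib Require Import Reals Lra Lia ZArith.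
Open Scope R_scope.

Definition tau : R := (1 + sqrt 5) / 2.

Definition modtau (x : R) : R := x - tau * IZR (Int_part (x / tau)).

(* Points of R / tau Z are represented by real numbers; two reals represent
   the same point iff modtau of their difference is 0.
   in_arc a b x : the image of x in R/tauZ lies in the open arc from a to b
   (positive direction), i.e. 0 < (x - a) mod tau < (b - a) mod tau. *)
Definition in_arc (a b x : R) : Prop :=
  0 < modtau (x - a) /\ modtau (x - a) < modtau (b - a).

Definition Zab (a b : R) (n : Z) : Prop := in_arc a b (IZR n).

Definition consecutive (a b : R) (n k : Z) : Prop :=
  (0 < k)%Z /\ Zab a b n /\ Zab a b (n + k) /\
  (forall m : Z, (n < m < n + k)%Z -> ~ Zab a b m).

(* Main.v *)
Require Import Defs.
From Stdlib Require Import Reals ZArith Lra Lia Psatz.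
Open Scope R_scope.

Lemma div5 : forall x y, (x*x = 5*y*y)%Z -> exists a, x = (5*a)%Z.
Proof.
intros x y H. exists (x/5)%Z.
assert (Hd := Z.div_mod x 5 ltac:(lia)).
assert (Hr := Z.mod_pos_bound x 5 ltac:(lia)).
remember (x mod 5)%Z as r. remember (x/5)%Z as a. subst x.
assert (r=0 \/ r=1 \/ r=2 \/ r=3 \/ r=4)%Z by lia.
destruct H0 as [->|[->|[->|[->| ->]]]]; nia.
Qed.

Lemma sq5_aux : forall n : nat, forall x y : Z,
  (Z.abs y <= Z.of_nat n)%Z -> (x*x = 5*y*y)%Z -> y = 0%Z.
Proof.
induction n; intros x y Hn H. lia.
destruct (div5 x y H) as [a Ha]. subst x.
assert (H2 : (y*y = 5*a*a)%Z) by lia.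
destruct (div5 y a H2) as [b Hb]. subst y.
assert (H3 : (a*a = 5*b*b)%Z) by lia.
assert (b = 0%Z). { apply (IHn a b); lia. }
lia.
Qed.

Lemma N_nonzero : forall k q : Z, (1 <= k)%Z -> (k*k - k*q - q*q <> 0)%Z.
Proof.
intros k q Hk H.
assert (Hq : q = 0%Z).
{ apply (sq5_aux (Z.abs_nat q) (2*k-q) q). lia. nia. }
subst q. nia.
Qed.

Definition s5 := sqrt 5.
Lemma s5sq : s5 * s5 = 5.
Proof. unfold s5. apply sqrt_sqrt. lra. Qed.
Lemma s5pos : 0 <= s5.
Proof. unfold s5. apply sqrt_pos. Qed.
Lemma s5b : 2.2 < s5 < 2.3.
Proof. pose proof s5sq; pose proof s5pos. split; nra. Qed.
Lemma tau_eq : tau = (1 + s5)/2.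
Proof. reflexivity. Qed.
Lemma tau_sq : tau * tau = tau + 1.
Proof. rewrite tau_eq. pose proof s5sq. nra. Qed.
Lemma tau_b : 1.6 < tau < 1.65.
Proof. rewrite tau_eq. pose proof s5b. lra. Qed.

Lemma modtau_b : forall y, 0 <= modtau y < tau.
Proof.
intros y. unfold modtau. pose proof tau_b.
destruct (base_Int_part (y/tau)) as [H1 H2].
set (I := IZR (Int_part (y / tau))) in *.
assert (y = tau * (y/tau)) by (field; lra).
set (r := y/tau) in *. split; nra.
Qed.

Lemma modtau_dec : forall y, exists c : Z, y = modtau y + tau * IZR c.
Proof. intros y. exists (Int_part (y/tau)). unfold modtau. ring. Qed.

Lemma modtau_char : forall y w c, 0 <= w < tau -> y = w + tau * IZR c -> modtau y = w.
Proof.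
intros y w c Hw Hy. destruct (modtau_dec y) as [c' Hc'].
pose proof (modtau_b y). pose proof tau_b.
assert (E : w - modtau y = tau * IZR (c' - c)) by (rewrite minus_IZR; lra).
assert (-1 < IZR (c' - c) < 1) by (split; nra).
destruct H1 as [H3 H4].
apply lt_IZR in H3. apply lt_IZR in H4.
assert (c' - c = 0)%Z by lia. rewrite H1 in E. simpl in E. lra.
Qed.

Fixpoint fib (n : nat) : Z :=
  match n with
  | O => 0%Z
  | S O => 1%Z
  | S ((S m) as p) => (fib m + fib p)%Z
  end.

Definition psi := 1 - tau.
Definition rr := tau - 1.

Lemma psi_sq : psi * psi = 1 + psi.
Proof. unfold psi. pose proof tau_sq. nra. Qed.
Lemma rr_tau : rr * tau = 1.
Proof. unfold rr. pose proof tau_sq. nra. Qed.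

Lemma fib_id : forall j, IZR (fib (S j)) = psi ^ j + tau * IZR (fib j)
  /\ IZR (fib (S (S j))) = psi ^ (S j) + tau * IZR (fib (S j)).
Proof.
induction j.
- simpl. unfold psi. split; lra.
- destruct IHj as [H1 H2]. split. exact H2.
  change (fib (S (S (S j)))) with (fib (S j) + fib (S (S j)))%Z.
  rewrite plus_IZR, H2. simpl pow.
  set (F := IZR (fib (S j))). set (P := psi ^ j).
  pose proof tau_sq as T.
  assert (tau * tau * F = (tau + 1) * F) by (rewrite T; ring).
  assert (tau * tau * P = (tau + 1) * P) by (rewrite T; ring).
  unfold psi in *. lra.
Qed.

Lemma fib_pos : forall j, (0 <= fib j /\ 1 <= fib (S j))%Z.
Proof.
induction j. simpl; lia.
destruct IHj. split. lia.
change (fib (S (S j))) with (fib j + fib (S j))%Z. lia.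
Qed.

Lemma fib_bound : forall j, IZR (fib (S j)) <= tau ^ j /\ IZR (fib (S (S j))) <= tau ^ (S j).
Proof.
pose proof tau_b.
induction j.
- simpl. lra.
- destruct IHj as [H1 H2]. split. exact H2.
  change (fib (S (S (S j)))) with (fib (S j) + fib (S (S j)))%Z.
  rewrite plus_IZR. simpl in *.
  pose proof tau_sq.
  replace (tau * (tau * tau^j)) with ((tau*tau) * tau^j) by ring.
  rewrite H0. lra.
Qed.

Lemma psi_pow : forall j, psi ^ j = rr ^ j \/ psi ^ j = - rr ^ j.
Proof.
induction j. left; reflexivity.
simpl. unfold psi, rr in *. destruct IHj as [H|H]; rewrite H; [right|left]; ring.
Qed.

Lemma lowerA : forall a b n k, consecutive a b n k -> 1 < 7 * modtau (b - a) * IZR k.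
Proof.
intros a b n k [Hk [Hn [Hnk _]]].
unfold Zab, in_arc in *.
set (L := modtau (b - a)) in *.
destruct (modtau_dec (IZR n - a)) as [c2 E2].
destruct (modtau_dec (IZR (n + k) - a)) as [c3 E3].
set (p2 := modtau (IZR n - a)) in *.
set (p3 := modtau (IZR (n + k) - a)) in *.
pose proof (modtau_b (b - a)) as HL. fold L in HL.
pose proof tau_b. pose proof tau_sq.
rewrite plus_IZR in E3.
set (q := (c3 - c2)%Z).
set (d := p3 - p2).
assert (Ek : IZR k = d + tau * IZR q) by (unfold q, d; rewrite minus_IZR; lra).
assert (HN := N_nonzero k q ltac:(lia)).
assert (EN : IZR (k*k - k*q - q*q) = d * (d + IZR q * (2*tau - 1))).
{ rewrite !minus_IZR, !mult_IZR, Ek.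
  assert (tau*tau*IZR q * IZR q = (tau+1) * IZR q * IZR q) by (rewrite H0; ring).
  lra. }
assert (HN1 : 1 <= Rabs (IZR (k*k - k*q - q*q))).
{ rewrite <- abs_IZR. apply IZR_le. lia. }
rewrite EN, Rabs_mult in HN1.
assert (Hd : Rabs d < L) by (unfold d; apply Rabs_def1; lra).
assert (Hk1 : 1 <= IZR k) by (apply IZR_le; lia).
assert (Hq : Rabs (IZR q) * tau <= IZR k + L).
{ replace (IZR q) with ((IZR k - d)/tau) by (rewrite Ek; field; lra).
  unfold Rdiv. rewrite Rabs_mult, Rabs_inv, (Rabs_right tau) by lra.
  replace (Rabs (IZR k - d) * / tau * tau) with (Rabs (IZR k - d)) by (field; lra).
  pose proof (Rabs_triang (IZR k) (- d)). rewrite Rabs_Ropp in H1.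
  rewrite (Rabs_right (IZR k)) in H1 by lra. unfold Rminus. lra. }
assert (HX : Rabs (d + IZR q * (2*tau - 1)) <= Rabs d + Rabs (IZR q) * (2*tau - 1)).
{ pose proof (Rabs_triang d (IZR q * (2*tau-1))). rewrite Rabs_mult in H1.
  rewrite (Rabs_right (2*tau-1)) in H1 by lra. lra. }
pose proof (Rabs_pos d). pose proof (Rabs_pos (IZR q)).
assert (Rabs (d + IZR q * (2*tau - 1)) < 7 * IZR k) by nra.
pose proof (Rabs_pos (d + IZR q * (2 * tau - 1))).
nra.
Qed.

Lemma minimal_pow : forall L N, rr ^ N < L ->
  exists m, rr ^ m < L /\ (m = O \/ exists m', m = S m' /\ L <= rr ^ m').
Proof.
intros L N. induction N; intros H.
- exists O. auto.
- destruct (Rlt_or_le (rr ^ N) L) as [H1|H1].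
  + apply IHN; exact H1.
  + exists (S N). split. exact H. right. exists N. auto.
Qed.

Lemma upperB : forall a b n k, 0 < modtau (b - a) -> consecutive a b n k ->
  IZR k * modtau (b - a) <= 8.
Proof.
intros a b n k HL0 [Hk [Hn [Hnk Hgap]]].
unfold Zab, in_arc in *.
set (L := modtau (b - a)) in *.
pose proof (modtau_b (b - a)) as HL. fold L in HL.
pose proof tau_b as Tb. pose proof tau_sq as T2. pose proof rr_tau as RT.
assert (Hrr : 0 < rr < 1) by (unfold rr; lra).
destruct (pow_lt_1_zero rr ltac:(rewrite Rabs_right; lra) L HL0) as [N HN].
assert (HN' : rr ^ N < L).
{ specialize (HN N (le_n N)). rewrite Rabs_right in HN. exact HN.
  apply Rle_ge, pow_le; lra. }
destruct (minimal_pow L N HN') as [m [Hm Hmin]].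
destruct (modtau_dec (IZR n - a)) as [c Ec].
set (p := modtau (IZR n - a)) in *.
assert (Hhit : forall (M : Z) s (F : Z), IZR M = s + tau * IZR F -> 0 < p + s < L ->
          (0 < M < k)%Z -> False).
{ intros M s F EM Hs HM. apply (Hgap (n + M)%Z). lia.
  assert (E : modtau (IZR (n + M) - a) = p + s).
  { apply (modtau_char _ _ (c + F)). lra.
    rewrite !plus_IZR. lra. }
  rewrite E. lra. }
assert (Hfk : (k <= fib (S (S (S m))))%Z).
{ destruct (Z_lt_le_dec (fib (S (S (S m)))) k) as [Hlt|Hle]; [exfalso|exact Hle].
  destruct (fib_id (S m)) as [E1 E2].
  pose proof (fib_pos (S m)) as [P1 P2].
  pose proof (fib_pos (S (S m))) as [P3 P4].
  assert (Hm1 : (0 < fib (S (S m)) < k)%Z).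
  { split. lia. change (fib (S (S (S m)))) with (fib (S m) + fib (S (S m)))%Z in Hlt. lia. }
  assert (Hm2 : (0 < fib (S (S (S m))) < k)%Z) by lia.
  assert (Epsi : psi ^ (S (S m)) = psi * psi ^ (S m)) by reflexivity.
  rewrite Epsi in E2.
  assert (HR : rr ^ (S m) * tau = rr ^ m) by (simpl; transitivity ((rr*tau) * rr^m); [ring | rewrite RT; ring]).
  assert (HR0 : 0 < rr ^ (S m)) by (apply pow_lt; lra).
  assert (Hpsi : psi = - rr) by (unfold psi, rr; ring).
  set (R := rr ^ (S m)) in *.
  assert (Htr : rr * R + R < L) by nra.
  destruct (psi_pow (S m)) as [Hu|Hu]; rewrite Hu in E1, E2; rewrite Hpsi in E2; fold R in E1, E2.
  + destruct (Rlt_or_le (p + R) L).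
    * apply (Hhit _ _ _ E1). lra. exact Hm1.
    * apply (Hhit _ _ _ E2). nra. exact Hm2.
  + destruct (Rlt_or_le (p + rr * R) L).
    * apply (Hhit _ _ _ E2). nra. exact Hm2.
    * apply (Hhit _ _ _ E1). nra. exact Hm1. }
assert (Hk2 : IZR k <= tau ^ (S (S m))).
{ apply Rle_trans with (IZR (fib (S (S (S m))))). apply IZR_le; exact Hfk.
  apply (fib_bound (S (S m))). }
assert (Ht3 : tau ^ 3 < 8) by (simpl; nra).
destruct Hmin as [-> | [m' [-> Hm']]].
- simpl in Hk2. assert (0 <= IZR k) by (apply IZR_le; lia). nra.
- assert (Ep : tau ^ (S (S (S m'))) * rr ^ m' = tau ^ 3).
  { replace (S (S (S m'))) with (3 + m')%nat by lia. rewrite pow_add, Rmult_assoc, <- Rpow_mult_distr.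
    rewrite Rmult_comm in RT. rewrite RT, pow1. ring. }
  assert (0 <= IZR k) by (apply IZR_le; lia).
  assert (0 < tau ^ (S (S (S m')))) by (apply pow_lt; lra).
  nra.
Qed.

Theorem lemma12 :
  exists C : R, 0 < C /\
    forall (a b : R), modtau (b - a) <> 0 ->
    forall (n1 k1 n2 k2 : Z),
      consecutive a b n1 k1 -> consecutive a b n2 k2 ->
      IZR k1 < C * IZR k2.
Proof.
exists 56. split. lra.
intros a b HL n1 k1 n2 k2 H1 H2.
pose proof (modtau_b (b - a)) as HB.
assert (HL0 : 0 < modtau (b - a)) by (destruct HB; destruct H; [exact H|congruence]).
pose proof (upperB a b n1 k1 HL0 H1) as U.
pose proof (lowerA a b n2 k2 H2) as Lw.
set (L := modtau (b - a)) in *.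
assert (IZR k1 * L < 56 * IZR k2 * L) by nra.
apply (Rmult_lt_reg_r L); lra.
Qed.
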